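(* Let $\beta>1$ and let $\mathcal{T}$ be a spanning tree of the ladder in the support of $\mathbb{P}$. Let $e=\{(i,h-1),(i,h)\}$ be a horizontal edge of the ray such that the other horizontal edge $\{(1-i,h-1),(1-i,h)\}$ is not in $\mathcal{T}$. Let $Y$ be the walk on the ray (the walk $X$ observed at its times on the ray) started at $(i,h)$. Then $$P^{\mathcal{T}}_{(i,h)}\big[Y_k\ne(i,h-1)\text{ for all }k\ge1\big]\ \ge\ \frac{\beta-1}{2\beta}.$$
   Context: Ladder graph: vertex set $\{0,1\}\times\mathbb{Z}$, vertical edges $z_k=\{(0,k),(1,k)\}$, horizontal edges joining $(i,k-1)$ and $(i,k)$. $\mathbb{P}$ is the law of the random spanning tree of the ladder obtained as the limit of weighted spanning tree measures on finite ladders (weight $c>0$ per vertical edge, $1$ per horizontal edge); a.s. it contains a unique bi-infinite self-avoiding path (the ray). Conductances: $z_k$ and the horizontal edges joining $(i,k-1),(i,k)$ have conductance $\beta^k$. $X$ is the random walk on $\mathcal{T}$ jumping to neighbors with probability proportional to conductances; the walk on the ray $Y$ jumps between ray neighbors with probabilities proportional to the conductances of the ray edges. *)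

(* Defs.v *)
From HB Require Import structures.
From mathcomp Require Import all_boot all_order all_algebra.
From mathcomp Require Import all_classical all_reals all_analysis.
Set Implicit Arguments. Unset Strict Implicit. Unset Printing Implicit Defensive.
Import Order.TTheory GRing.Theory Num.Theory.
Import numFieldNormedType.Exports.
Local Open Scope classical_set_scope.
Local Open Scope ring_scope.

(* Vertices of the ladder {0,1} x Z ; the boolean encodes the row (false = 0). *)
Definition V := (bool * int)%type.

(* Edges of the ladder:
   (None, k)   = the vertical edge z_k = {(0,k),(1,k)};
   (Some i, k) = the horizontal edge {(i,k-1),(i,k)}. *)
Definition ledge := (option bool * int)%type.

Definition ladder_adj (u v : V) : bool :=
  ((u.2 == v.2) && (u.1 != v.1)) ||
  ((u.1 == v.1) && ((u.2 == v.2 + 1) || (v.2 == u.2 + 1))).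

Definition edge_of (u v : V) : ledge :=
  if u.2 == v.2 then (None, u.2) else (Some u.1, Num.max u.2 v.2).

Definition tadj (E : pred ledge) : rel V :=
  fun u v => ladder_adj u v && E (edge_of u v).

Definition tconn (E : pred ledge) (u v : V) : Prop :=
  exists p : seq V, path (tadj E) u p && (last u p == v).

Definition rm_edge (E : pred ledge) (e : ledge) : pred ledge :=
  fun e' => E e' && (e' != e).

Definition acyclic (E : pred ledge) : Prop :=
  forall u v, tadj E u v -> ~ tconn (rm_edge E (edge_of u v)) u v.

Definition spanning_tree (E : pred ledge) : Prop :=
  (forall u v, tconn E u v) /\ acyclic E.

Definition in_winV (n : nat) (u : V) : bool := (- (n%:Z) <= u.2 <= n%:Z).

(* edges of the finite ladder: inl k = vertical edge at height k-n (k <= 2n),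
   inr (i,k) = horizontal edge {(i,k-n),(i,k+1-n)} (k < 2n) *)
Definition fedge (n : nat) := ('I_(2 * n + 1) + (bool * 'I_(2 * n)))%type.

Definition emb (n : nat) (f : fedge n) : ledge :=
  match f with
  | inl k => (None, k%:Z - n%:Z)
  | inr (i, k) => (Some i, k%:Z + 1 - n%:Z)
  end.

Definition fcfg (n : nat) (S : {set fedge n}) : pred ledge :=
  fun e => [exists f in S, emb f == e].

Definition is_vert (n : nat) (f : fedge n) : bool :=
  if f is inl _ then true else false.

Definition fspan (n : nat) (S : {set fedge n}) : Prop :=
  (forall u v, in_winV n u -> in_winV n v -> tconn (fcfg S) u v) /\
  acyclic (fcfg S).

Definition fweight (R : realType) (c : R) (n : nat) (S : {set fedge n}) : R :=
  c ^+ #|[set f in S | is_vert f]|.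

Definition Pfin (R : realType) (c : R) (n : nat) (A : pred ledge -> Prop) : R :=
  (\sum_(S : {set fedge n} | `[< fspan S /\ A (fcfg S) >]) fweight c S) /
  (\sum_(S : {set fedge n} | `[< fspan S >]) fweight c S).

Definition in_winE (N : nat) (e : ledge) : bool :=
  match e with
  | (None, k) => (- (N%:Z) <= k <= N%:Z)
  | (Some _, k) => (- (N%:Z) < k <= N%:Z)
  end.

Definition cyl (N : nat) (T : pred ledge) : pred ledge -> Prop :=
  fun E => forall e, in_winE N e -> E e = T e.

(* T lies in the support of the limit measure P (weak limit of the Pfin):
   every basic cylinder neighbourhood of T has positive limiting probability *)
Definition in_support (R : realType) (c : R) (T : pred ledge) : Prop :=
  forall N : nat, exists l : R, 0 < l /\ ((fun n => Pfin c n (cyl N T)) @ \oo --> l).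

Definition biinf_path (T : pred ledge) (r : int -> V) : Prop :=
  injective r /\ forall j, tadj T (r j) (r (j + 1)).

Definition is_ray (T : pred ledge) (r : int -> V) : Prop :=
  biinf_path T r /\
  (forall r', biinf_path T r' -> forall j, exists j', r' j = r j').

(* conductance of the edge joining u and v: beta^k for z_k and for
   the horizontal edges {(i,k-1),(i,k)} *)
Definition cond (R : realType) (beta : R) (u v : V) : R :=
  beta ^ (Num.max u.2 v.2).

(* walk Y on the ray r (indexed by Z): probability of stepping forward *)
Definition pfwd (R : realType) (beta : R) (r : int -> V) (j : int) : R :=
  cond beta (r j) (r (j + 1)) /
  (cond beta (r (j - 1)) (r j) + cond beta (r j) (r (j + 1))).

(* avoid_fin n j = P_{r j}[ Y_k <> a for all 1 <= k <= n ] *)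
Fixpoint avoid_fin (R : realType) (beta : R) (r : int -> V) (a : V)
    (n : nat) (j : int) : R :=
  match n with
  | 0 => 1
  | n'.+1 =>
      pfwd beta r j *
        (if r (j + 1) == a then 0 else avoid_fin beta r a n' (j + 1)) +
      (1 - pfwd beta r j) *
        (if r (j - 1) == a then 0 else avoid_fin beta r a n' (j - 1))
  end.

(* P_{r j}[ Y_k <> a for all k >= 1 ] (limit of a nonincreasing sequence) *)
Definition avoid_prob (R : realType) (beta : R) (r : int -> V) (a : V) (j : int) : R :=
  lim ((fun n => avoid_fin beta r a n j) @ \oo).

(* Main.v *)
Require Import Defs.
From HB Require Import structures.
From mathcomp Require Import all_boot all_order all_algebra.
From mathcomp Require Import all_classical all_reals all_analysis.
From mathcomp Require Import zify ring lra.
Import Order.TTheory GRing.Theory Num.Theory.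
Import numFieldNormedType.Exports.
Local Open Scope classical_set_scope.
Local Open Scope ring_scope.
Set Implicit Arguments. Unset Strict Implicit.
Lemma cond_gt0 (R : realType) (beta : R) u v : 0 < beta -> 0 < cond beta u v.
Proof. by move=> b0; rewrite /cond exprz_gt0. Qed.

Lemma condC (R : realType) (beta : R) u v : cond beta u v = cond beta v u.
Proof. by rewrite /cond maxC. Qed.

Lemma pfwd_ge0 (R : realType) (beta : R) r j : 0 < beta -> 0 <= pfwd beta r j.
Proof.
by move=> b0; rewrite /pfwd divr_ge0 // ?addr_ge0 // ltW // cond_gt0.
Qed.

Lemma pfwd_le1 (R : realType) (beta : R) r j : 0 < beta -> pfwd beta r j <= 1.
Proof.
move=> b0; rewrite /pfwd ler_pdivrMr ?mul1r ?addr_gt0 ?cond_gt0 //.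
by rewrite lerDr ltW // cond_gt0.
Qed.

Lemma avoid_mono (R : realType) (beta : R) r a n : 0 < beta ->
  forall j, avoid_fin beta r a n.+1 j <= avoid_fin beta r a n j.
Proof.
move=> b0; elim: n => [|n IH] j.
  rewrite /=.
  have p0 := pfwd_ge0 r j b0; have p1 := pfwd_le1 r j b0.
  case: ifP => _; case: ifP => _; nra.
rewrite [X in _ <= X]/= [X in X <= _]/=.
have p0 := pfwd_ge0 r j b0; have p1 := pfwd_le1 r j b0.
apply: lerD; apply: ler_wpM2l; rewrite ?subr_ge0 //;
  case: ifP => // _; exact: IH.
Qed.

Lemma avoid_prob_ge (R : realType) (beta : R) r a j (x : R) : 0 < beta ->
  (forall n, x <= avoid_fin beta r a n j) -> x <= avoid_prob beta r a j.
Proof.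
move=> b0 Hx.
set u := fun n => avoid_fin beta r a n j.
have hom : {homo u : n m / (n <= m)%N >-> m <= n}.
  move=> n m; elim: m => [|m IH]; first by rewrite leqn0 => /eqP ->.
  rewrite leq_eqVlt => /orP [/eqP -> //|]; rewrite ltnS => /IH.
  by apply: le_trans; apply: avoid_mono.
have cu : cvgn u.
  apply: nonincreasing_is_cvgn => //.
  by exists x => y [n _ <-]; apply: Hx.
rewrite /avoid_prob; apply: limr_ge => //.
exact: nearW.
Qed.
Lemma pfwd_refl (R : realType) (beta : R) r j : 0 < beta ->
  pfwd beta (fun k => r (- k)) j = 1 - pfwd beta r (- j).
Proof.
move=> b0; rewrite /pfwd /= opprD opprB.
have -> : cond beta (r (1 - j)) (r (- j)) = cond beta (r (- j)) (r (- j + 1)).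
  by rewrite condC addrC.
rewrite [cond beta (r (- j - 1)) (r (- j))]condC.
have A0 := cond_gt0 (r (- j)) (r (- j - 1)) b0.
have B0 := cond_gt0 (r (- j)) (r (- j + 1)) b0.
field; lra.
Qed.

Lemma avoid_refl (R : realType) (beta : R) r a n : 0 < beta ->
  forall j, avoid_fin beta (fun k => r (- k)) a n j = avoid_fin beta r a n (- j).
Proof.
move=> b0; elim: n => [|n IH] j //=.
rewrite !IH pfwd_refl // opprD.
have -> : - (j - 1) = - j + 1 by ring.
set X := (if _ then _ else _); set Y := (if _ then _ else _).
ring.
Qed.
Lemma idxS (j0 : int) (m : nat) : j0 + (m.+1)%:Z = j0 + m%:Z + 1.
Proof. lia. Qed.

Lemma adj_cases (u v : V) : ladder_adj u v ->
  [\/ v = (~~ u.1, u.2), v = (u.1, u.2 + 1) | v = (u.1, u.2 - 1)].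
Proof.
case: u v => [b k] [b' k']; rewrite /ladder_adj /=.
case/orP => [/andP [/eqP <- ne] | /andP [/eqP <- /orP [/eqP -> | /eqP ->]]].
- by apply: Or31; case: b b' ne => [] [].
- by apply: Or33; rewrite addrK.
- by apply: Or32.
Qed.
Lemma levelsA (x : nat -> V) (i : bool) (h : int) :
  x 0%N = (i, h) -> (forall m, ladder_adj (x m) (x m.+1)) ->
  forall m, (forall l, (l < m)%N -> x l.+1 <> ((x l).1, (x l).2 - 1)) ->
  h <= (x m).2 /\ forall k, h <= k < (x m).2 -> exists l, (l < m)%N /\ (x l).2 = k.
Proof.
move=> x0 xadj; elim=> [|m IH] nd.
  rewrite x0 /=; split => // k; lia.
have [hy lv] : h <= (x m).2 /\ forall k, h <= k < (x m).2 -> exists l, (l < m)%N /\ (x l).2 = k.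
  by apply: IH => l lm; apply: nd; apply: ltnW.
case: (adj_cases (xadj m)) => [->|->|E] /=.
- split=> // k /lv [l [lm e]]; exists l; split=> //; exact: ltnW.
- split; first lia.
  move=> k hk; have [->|ne] := eqVneq k (x m).2; first by exists m.
  have /lv [l [lm e]] : h <= k < (x m).2 by lia.
  by exists l; split=> //; apply: ltnW.
- by exfalso; apply: (nd m).
Qed.

Lemma nodown (x : nat -> V) (i : bool) (h : int) :
  injective x -> x 0%N = (i, h) -> x 1%N <> (i, h - 1) ->
  (forall m, ladder_adj (x m) (x m.+1)) ->
  (forall m, ~ (x m = (~~ i, h) /\ x m.+1 = (~~ i, h - 1))) ->
  forall m, x m.+1 <> ((x m).1, (x m).2 - 1).
Proof.
move=> xinj x0 x1 xadj miss.
suff H : forall m l, (l < m)%N -> x l.+1 <> ((x l).1, (x l).2 - 1).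
  by move=> m; apply: (H m.+1).
elim=> [//|m IH] l; rewrite ltnS leq_eqVlt => /orP [/eqP -> | /IH //].
move=> dn.
have [hy lv] := levelsA x0 xadj IH.
case E : (x m) => [rho y]; rewrite E /= in dn hy lv.
have [d yd] : exists d : nat, y = h + d%:Z.
  by exists `|y - h|%N; lia.
have claim : forall n, (n <= d)%N ->
    x (m + n)%N = (rho, y - n%:Z) /\ x (m + n).+1 = (rho, y - n%:Z - 1).
  elim=> [|n IHn] nd; first by rewrite addn0 E subr0.
  have [e1 e2] := IHn (ltnW nd).
  split; first by rewrite addnS e2; congr pair; lia.
  rewrite addnS.
  case: (adj_cases (xadj (m + n).+1)); rewrite e2 /=.
  - move=> e3; exfalso.
    have /lv [q [lm el]] : h <= y - n%:Z - 1 < y by lia.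
    case El : (x q) => [b k]; rewrite El /= in el; subst k.
    case: (eqVneq b rho) => [eb|nb].
      rewrite eb -e2 in El; move/xinj: El; lia.
    have : x q = x (m + n).+2 by rewrite El e3; congr pair; move: nb; clear; case: b; case: rho.
    move/xinj; lia.
  - move=> e3; exfalso.
    have : x (m + n).+2 = x (m + n)%N by rewrite e3 e1; congr pair; lia.
    move/xinj; lia.
  - by move=> ->; congr pair; lia.
have [e1 e2] := claim d (leqnn d).
have yh : y - d%:Z = h by lia.
rewrite yh in e1 e2.
case: (eqVneq rho i) => [eri|nri].
  rewrite eri -x0 in e1; have := xinj _ _ e1 => md.
  have m0 : m = 0%N by lia.
  have d0 : d = 0%N by lia.
  by apply: x1; rewrite m0 d0 eri in e2.
apply: (miss (m + d)%N); rewrite e1 e2.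
by have -> : rho = ~~ i by move: nri; clear; case: rho; case: i.
Qed.
Fixpoint Ssum (R : realType) (beta : R) (x : nat -> V) (h : int) (m : nat) : R :=
  if m is m'.+1 then Ssum beta x h m' + beta ^ h / cond beta (x m') (x m'.+1) else 0.

Definition wgt (R : realType) (beta : R) (x : nat -> V) (m : nat) : R :=
  if m is m'.+1 then (if (x m').2 == (x m).2 then 2 else beta + 1) else beta + 1.

Lemma powsplit (R : realType) (beta : R) (h y : int) : 0 < beta ->
  beta ^ h = beta ^ (h - y) * beta ^ y.
Proof. by move=> b0; rewrite -expfzDr ?subrK // gt_eqF. Qed.

Lemma Sinv (R : realType) (beta : R) (x : nat -> V) (h : int) :
  1 < beta -> injective x -> (x 0%N).2 = h ->
  (forall m, ladder_adj (x m) (x m.+1)) ->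
  (forall m, x m.+1 <> ((x m).1, (x m).2 - 1)) ->
  forall m, Ssum beta x h m + beta ^ (h - (x m).2) * wgt beta x m / (beta - 1)
            <= (beta + 1) / (beta - 1).
Proof.
move=> b1 xinj x0 xadj nd.
have b0 : 0 < beta by lra.
have bm : 0 < beta - 1 by lra.
elim=> [|m IH].
  by rewrite /= x0 subrr expr0z add0r mul1r.
have wge : 2 <= wgt beta x m.
  case: m {IH} => [|m] /=; first lra.
  by case: ifP => _; lra.
set P := beta ^ (h - (x m).2).
have P0 : 0 < P by rewrite exprz_gt0.
have -> : Ssum beta x h m.+1 = Ssum beta x h m + beta ^ h / cond beta (x m) (x m.+1) by [].
have -> : wgt beta x m.+1 = if (x m).2 == (x m.+1).2 then 2 else beta + 1 by [].
case: (adj_cases (xadj m)) => [E|E|E]; last by case: (nd m).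
-
  have wm : wgt beta x m = beta + 1.
    case: m {IH wge P P0} E => //= m E; case: ifP => // /eqP e.
    exfalso.
    case: (adj_cases (xadj m)) => [E'|E'|E'].
    + have : x m.+2 = x m by rewrite E E' /= negbK -surjective_pairing.
      by move/xinj; lia.
    + by rewrite E' /= in e; lia.
    + by rewrite E' /= in e; lia.
  rewrite E /= eqxx.
  rewrite /cond /= maxxx.
  rewrite (@powsplit _ beta h (x m).2 b0) -/P.
  have ey : beta ^ (x m).2 != 0 by rewrite gt_eqF // exprz_gt0.
  rewrite wm in IH.
  have -> : P * beta ^ (x m).2 / beta ^ (x m).2 = P by field.
  rewrite -/P in IH.
  suff : P + P * 2 / (beta - 1) = P * (beta + 1) / (beta - 1) by lra.
  field; lra.
-
  rewrite E /=.
  have -> : ((x m).2 == (x m).2 + 1) = false by apply/eqP; lia.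
  rewrite /cond /=.
  have -> : Num.max (x m).2 ((x m).2 + 1) = (x m).2 + 1.
    by apply/max_idPr; lia.
  rewrite (@powsplit _ beta h ((x m).2 + 1) b0).
  have -> : h - ((x m).2 + 1) = (h - (x m).2) + (-1) by ring.
  rewrite expfzDr ?gt_eqF // -/P.
  have ey : beta ^ ((x m).2 + 1) != 0 by rewrite gt_eqF // exprz_gt0.
  have -> : P * beta ^ (-1) * beta ^ ((x m).2 + 1) / beta ^ ((x m).2 + 1) = P / beta.
    rewrite exprN1; field; lra.
  rewrite exprN1.
  rewrite -/P in IH.
  have e1 : P / beta + P * beta^-1 * (beta + 1) / (beta - 1) = 2 * P / (beta - 1).
    field; lra.
  have e2 : 2 * P / (beta - 1) <= P * wgt beta x m / (beta - 1).
    by rewrite ler_pM2r ?invr_gt0 //; nra.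
  lra.
Qed.

Lemma Sbound (R : realType) (beta : R) (x : nat -> V) (h : int) :
  1 < beta -> injective x -> (x 0%N).2 = h ->
  (forall m, ladder_adj (x m) (x m.+1)) ->
  (forall m, x m.+1 <> ((x m).1, (x m).2 - 1)) ->
  forall m, Ssum beta x h m <= (beta + 1) / (beta - 1).
Proof.
move=> b1 xinj x0 xadj nd m.
have := Sinv b1 xinj x0 xadj nd m.
have w0 : 0 <= wgt beta x m.
  case: m => [|m] /=; first lra.
  by case: ifP => _; lra.
have : 0 <= beta ^ (h - (x m).2) * wgt beta x m / (beta - 1).
  by rewrite divr_ge0 ?mulr_ge0 // ?subr_ge0 ?ltW // exprz_gt0 //; lra.
lra.
Qed.
Lemma harm (R : realType) (a b H t s : R) : 0 < a -> 0 < b ->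
  t * (1 + s) = b / (a + b) * (t * (1 + (s + H / b))) +
                (1 - b / (a + b)) * (t * (1 + (s - H / a))).
Proof. move=> a0 b0; field; lra. Qed.

Lemma core (R : realType) (beta : R) (r : int -> V) (i : bool) (h j0 : int) :
  1 < beta -> injective r -> (forall j, ladder_adj (r j) (r (j + 1))) ->
  (forall j, ~ (r j = (~~ i, h) /\ r (j + 1) = (~~ i, h - 1))) ->
  r (j0 - 1) = (i, h - 1) -> r j0 = (i, h) ->
  forall n, (beta - 1) / (2 * beta) <= avoid_fin beta r (i, h - 1) n j0.
Proof.
move=> b1 rinj radj rmiss ra r0.
have b0 : 0 < beta by lra.
pose x := fun m : nat => r (j0 + m%:Z).
have xS : forall m, x m.+1 = r (j0 + m%:Z + 1) by move=> m; rewrite /x idxS.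
have xinj : injective x by move=> m m' /rinj; lia.
have x0 : x 0%N = (i, h) by rewrite /x addr0.
have x1 : x 1%N <> (i, h - 1) by rewrite -ra => /rinj; lia.
have xadj : forall m, ladder_adj (x m) (x m.+1) by move=> m; rewrite xS; apply: radj.
have xmiss : forall m, ~ (x m = (~~ i, h) /\ x m.+1 = (~~ i, h - 1)).
  by move=> m; rewrite xS; apply: rmiss.
have nd := nodown xinj x0 x1 xadj xmiss.
have x0h : (x 0%N).2 = h by rewrite x0.
have SB := Sbound b1 xinj x0h xadj nd.
have xna : forall m, (x m == (i, h - 1)) = false.
  by move=> m; apply/eqP; rewrite -ra => /rinj; lia.
set t := (beta - 1) / (2 * beta).
have t0 : 0 <= t by rewrite divr_ge0 //; lra.
have tB : t * (1 + (beta + 1) / (beta - 1)) = 1 by rewrite /t; field; lra.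
suff claim : forall n m, t * (1 + Ssum beta x h m) <= avoid_fin beta r (i, h - 1) n (j0 + m%:Z).
  by move=> n; have := claim n 0%N; rewrite addr0 /= addr0 mulr1.
elim=> [|n IH] m.
  apply: (le_trans (_ : _ <= t * (1 + (beta + 1) / (beta - 1)))); last by rewrite tB.
  by apply: ler_wpM2l => //; rewrite lerD2l; exact: SB.
rewrite [avoid_fin _ _ _ n.+1 _]/= -xS xna.
have Hf := IH m.+1.
rewrite idxS in Hf.
case: m Hf => [|m] Hf.
  have p0 := pfwd_ge0 r (j0 + 0%:Z) b0; have p1 := pfwd_le1 r (j0 + 0%:Z) b0.
  set c := cond beta (x 0%N) (x 1%N).
  have c0 : 0 < c by apply: cond_gt0.
  have E0 : j0 + 0%:Z = j0 by lia.
  rewrite E0 in p0 p1 Hf *; rewrite ra eqxx mulr0 addr0.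
  have pe : pfwd beta r j0 = c / (beta ^ h + c).
    rewrite /pfwd ra /c x0 /x /= r0.
    have -> : cond beta (i, h - 1) (i, h) = beta ^ h.
      by rewrite /cond /=; congr (_ ^ _); apply/max_idPr; lia.
    by [].
  rewrite addr0 mulr1.
  apply: (le_trans (_ : t <= pfwd beta r j0 * (t * (1 + Ssum beta x h 1)))).
    rewrite pe /= add0r le_eqVlt; apply/orP; left; apply/eqP.
    have hb : 0 < beta ^ h by rewrite exprz_gt0.
    rewrite -/c; field.
    by rewrite gt_eqF // gt_eqF // addr_gt0.
  by apply: ler_wpM2l.
have p0 := pfwd_ge0 r (j0 + (m.+1)%:Z) b0; have p1 := pfwd_le1 r (j0 + (m.+1)%:Z) b0.
set c := cond beta (x m.+1) (x m.+2).
have c0 : 0 < c by apply: cond_gt0.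
have -> : j0 + (m.+1)%:Z - 1 = j0 + m%:Z by lia.
rewrite -/(x m) xna.
set c' := cond beta (x m) (x m.+1).
have c'0 : 0 < c' by apply: cond_gt0.
have pe : pfwd beta r (j0 + (m.+1)%:Z) = c / (c' + c).
  rewrite /pfwd /c /c' /x /=.
  have -> : j0 + (m.+1)%:Z + 1 = j0 + (m.+2)%:Z by lia.
  have -> : j0 + (m.+1)%:Z - 1 = j0 + m%:Z by lia.
  by [].
rewrite pe (harm (a:=c') (b:=c) (beta ^ h) t (Ssum beta x h m.+1)) //.
apply: lerD; apply: ler_wpM2l; rewrite -?pe ?subr_ge0 //.
have -> : Ssum beta x h m.+1 - beta ^ h / c' = Ssum beta x h m.
  by rewrite /= /c' addrK.
exact: IH.
Qed.
Lemma ladder_adjC u v : ladder_adj u v = ladder_adj v u.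
Proof.
case: u v => [b k] [b' k']; rewrite /ladder_adj /=.
by rewrite (eq_sym k) (eq_sym b) (eq_sym b') [(k' == _) || _]orbC.
Qed.

Lemma miss_edge (T : pred ledge) (i : bool) (h : int) :
  ~~ T (Some (~~ i), h) ->
  ~ tadj T (~~ i, h) (~~ i, h - 1) /\ ~ tadj T (~~ i, h - 1) (~~ i, h).
Proof.
move=> nT; rewrite /tadj /edge_of /=.
have -> : (h == h - 1) = false by apply/eqP; lia.
have -> : (h - 1 == h) = false by apply/eqP; lia.
have -> : Num.max h (h - 1) = h by apply/max_idPl; lia.
have -> : Num.max (h - 1) h = h by apply/max_idPr; lia.
by rewrite (negbTE nT) !andbF.
Qed.

Unset Implicit Arguments.

Theorem mainTheorem10 (R : realType) (c beta : R) (T : pred ledge)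
    (r : int -> V) (i : bool) (h : int) (j0 : int) :
  0 < c -> 1 < beta ->
  spanning_tree T -> in_support c T ->
  is_ray T r ->
  (exists j, (r j = (i, h - 1) /\ r (j + 1) = (i, h)) \/
             (r j = (i, h) /\ r (j + 1) = (i, h - 1))) ->
  ~~ T (Some (~~ i), h) ->
  r j0 = (i, h) ->
  (beta - 1) / (2 * beta) <= avoid_prob beta r (i, h - 1) j0.
Proof.
move=> c0 b1 _ _ [[rinj radj] _] [j Hj] nT r0.
have b0 : 0 < beta by lra.
have [m1 m2] := miss_edge nT.
have ladj : forall k, ladder_adj (r k) (r (k + 1)) by move=> k; case/andP: (radj k).
case: Hj => [[ea eb] | [ea eb]].
  have jj : j = j0 - 1 by rewrite -r0 in eb; have := rinj _ _ eb; lia.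
  subst j.
  apply: avoid_prob_ge => // n; apply: core => //.
  by move=> k [e1 e2]; apply: m1; rewrite -e1 -e2; apply: radj.
have jj : j = j0 by rewrite -r0 in ea; exact: rinj.
subst j.
pose r' := fun k => r (- k).
have -> : avoid_prob beta r (i, h - 1) j0 = avoid_prob beta r' (i, h - 1) (- j0).
  rewrite /avoid_prob.
  have -> : (fun n => avoid_fin beta r (i, h - 1) n j0) =
            (fun n => avoid_fin beta r' (i, h - 1) n (- j0)).
    by apply: funext => n; rewrite avoid_refl // opprK.
  by [].
apply: avoid_prob_ge => // n; apply: core => //.
- by move=> k k' /= /rinj /oppr_inj.
- move=> k; rewrite /r' ladder_adjC.
  have -> : - k = - (k + 1) + 1 by ring.
  exact: ladj.
- move=> k [e1 e2]; apply: m2; rewrite /r' in e1 e2.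
  rewrite -e1 -e2.
  have -> : - k = - (k + 1) + 1 by ring.
  exact: radj.
- by rewrite /r' /=; have -> : - (- j0 - 1) = j0 + 1 by ring.
- by rewrite /r' opprK.
Qed.
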